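(* Let $\lambda_0,\lambda\in\{-1,0,1\}$ and let $U:\mathbb{H}^1_{\lambda_0}\to\mathbb{H}^1_\lambda$, $$U=\frac{1}{\sqrt{|F_1|^2-\lambda|F_2|^2}}\begin{pmatrix}F_1&\lambda\bar F_2\\ F_2&\bar F_1\end{pmatrix},\qquad |F_1|^2>\lambda|F_2|^2,$$ be a bundle map covering a holomorphic map $f:M_0\to M$ (so $\pi_\lambda\circ U=f\circ\pi_{\lambda_0}$), and let $\mathcal{A}=U^{-1}dU$. Let $s$ be the section $s(z)=\frac{1}{\sqrt{1-\lambda_0|z|^2}}\begin{pmatrix}1&\lambda_0\bar z\\ z&1\end{pmatrix}$ of $\pi_{\lambda_0}$, let $f_1=F_1\circ s$, and for $z$ not a zero of $f_1$ let $r_{f_1}(z)=\begin{pmatrix}\bar f_1/|f_1|&0\\0&f_1/|f_1|\end{pmatrix}\in\mathbb{H}^1_\lambda$. Let $\hat A=-\Gamma t_0+\frac i2(e\,t_--\bar e\,t_+)$ be the connection on $M$ built from $e=\frac{2dz}{1-\lambda|z|^2}$ and $\Gamma=-i\lambda\frac{z\,d\bar z-\bar z\,dz}{1-\lambda|z|^2}$. Then, away from the zeros of $f_1$ (where $r_{f_1}$ is possibly singular), $$f^*\hat A=r_{f_1}^{-1}\,(s^*\mathcal{A})\,r_{f_1}+r_{f_1}^{-1}dr_{f_1}.$$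
   Context: For $\mu\in\{-1,0,1\}$, $\mathbb{H}^1_\mu=\left\{\begin{pmatrix} z_1&\mu\bar z_2\\ z_2&\bar z_1\end{pmatrix}: |z_1|^2-\mu|z_2|^2=1\right\}$, with projection $\pi_\mu(h)=z_2/z_1$ onto the constant-curvature surface $M_\mu$ (Riemann sphere, $\mathbb{C}$, or unit disc for $\mu=-1,0,1$, metric $4dzd\bar z/(1-\mu|z|^2)^2$); $M_0=M_{\lambda_0}$, $M=M_\lambda$. The Lie algebra of $\mathbb{H}^1_\lambda$ has basis $t_0=-\frac{i}{2}\begin{pmatrix}1&0\\0&-1\end{pmatrix}$, $t_1=-\frac{i}{2}\begin{pmatrix}0&-\lambda\\1&0\end{pmatrix}$, $t_2=\frac12\begin{pmatrix}0&\lambda\\1&0\end{pmatrix}$, $t_\pm=t_1\pm it_2$. A bundle map sends fibres of $\pi_{\lambda_0}$ into fibres of $\pi_\lambda$. The section $s$ is defined where $1-\lambda_0|z|^2>0$ (only locally, on $\mathbb{C}$, when $\lambda_0=-1$). *)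

(* Defs.v *)
From Stdlib Require Import Reals.
From Coquelicot Require Import Coquelicot.
Open Scope R_scope.

Local Open Scope C_scope.

Record mat2 := Mat2 { a11 : C; a12 : C; a21 : C; a22 : C }.

Definition madd (A B : mat2) : mat2 :=
  Mat2 (a11 A + a11 B) (a12 A + a12 B) (a21 A + a21 B) (a22 A + a22 B).
Definition mscal (c : C) (A : mat2) : mat2 :=
  Mat2 (c * a11 A) (c * a12 A) (c * a21 A) (c * a22 A).
Definition mmul (A B : mat2) : mat2 :=
  Mat2 (a11 A * a11 B + a12 A * a21 B) (a11 A * a12 B + a12 A * a22 B)
       (a21 A * a11 B + a22 A * a21 B) (a21 A * a12 B + a22 A * a22 B).
Definition mdet (A : mat2) : C := a11 A * a22 A - a12 A * a21 A.
Definition minv (A : mat2) : mat2 :=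
  mscal (/ mdet A) (Mat2 (a22 A) (- a12 A) (- a21 A) (a11 A)).

Definition inH (mu : R) (h : mat2) : Prop :=
  a12 h = RtoC mu * Cconj (a21 h) /\ a22 h = Cconj (a11 h) /\
  (Cmod (a11 h))^2 - mu * (Cmod (a21 h))^2 = 1.

(** projection pi_mu(h) = z2 / z1 (affine chart) *)
Definition proj (h : mat2) : C := a21 h / a11 h.

Definition inD (lam0 : R) (z : C) : Prop := 1 - lam0 * (Cmod z)^2 > 0.

Definition sec (lam0 : R) (z : C) : mat2 :=
  mscal (RtoC (/ sqrt (1 - lam0 * (Cmod z)^2)))
        (Mat2 1 (RtoC lam0 * Cconj z) z 1).

Definition Umap (lam : R) (F1 F2 : mat2 -> C) (h : mat2) : mat2 :=
  mscal (RtoC (/ sqrt ((Cmod (F1 h))^2 - lam * (Cmod (F2 h))^2)))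
        (Mat2 (F1 h) (RtoC lam * Cconj (F2 h)) (F2 h) (Cconj (F1 h))).

Definition t0 : mat2 := mscal (- Ci / 2) (Mat2 1 0 0 (-1)).
Definition t1 (lam : R) : mat2 := mscal (- Ci / 2) (Mat2 0 (- RtoC lam) 1 0).
Definition t2 (lam : R) : mat2 := mscal (/ 2) (Mat2 0 (RtoC lam) 1 0).
Definition tp (lam : R) : mat2 := madd (t1 lam) (mscal Ci (t2 lam)).
Definition tm (lam : R) : mat2 := madd (t1 lam) (mscal (- Ci) (t2 lam)).

Definition pdx (g : C -> C) (z : C) : C :=
  (Derive (fun t => fst (g ((fst z + t)%R, snd z))) 0,
   Derive (fun t => snd (g ((fst z + t)%R, snd z))) 0).
Definition pdy (g : C -> C) (z : C) : C :=
  (Derive (fun t => fst (g (fst z, (snd z + t)%R))) 0,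
   Derive (fun t => snd (g (fst z, (snd z + t)%R))) 0).
Definition mpdx (g : C -> mat2) (z : C) : mat2 :=
  Mat2 (pdx (fun w => a11 (g w)) z) (pdx (fun w => a12 (g w)) z)
       (pdx (fun w => a21 (g w)) z) (pdx (fun w => a22 (g w)) z).
Definition mpdy (g : C -> mat2) (z : C) : mat2 :=
  Mat2 (pdy (fun w => a11 (g w)) z) (pdy (fun w => a12 (g w)) z)
       (pdy (fun w => a21 (g w)) z) (pdy (fun w => a22 (g w)) z).

Definition real_diff (g : C -> C) (z : C) : Prop :=
  differentiable_pt (fun x y => fst (g (x, y))) (fst z) (snd z) /\
  differentiable_pt (fun x y => snd (g (x, y))) (fst z) (snd z).

Definition holo_at (f : C -> C) (z : C) : Prop :=
  ex_derive (K := C_AbsRing) (V := C_NormedModule) f z.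

(** 1-forms on an open subset of C = R^2, written in coordinates:
    omega = cx dx + cy dy.  Scalar (C-valued) and matrix-valued forms. *)
Record cform := CForm { cx : C -> C; cy : C -> C }.
Record mform := MForm { fx : C -> mat2; fy : C -> mat2 }.

Definition dz : cform := CForm (fun _ => 1) (fun _ => Ci).
Definition dzbar : cform := CForm (fun _ => 1) (fun _ => - Ci).
Definition cf_scal (g : C -> C) (w : cform) : cform :=
  CForm (fun z => g z * cx w z) (fun z => g z * cy w z).
Definition cf_add (w1 w2 : cform) : cform :=
  CForm (fun z => cx w1 z + cx w2 z) (fun z => cy w1 z + cy w2 z).
Definition cf_conj (w : cform) : cform :=
  CForm (fun z => Cconj (cx w z)) (fun z => Cconj (cy w z)).
Definition cf_tens (w : cform) (T : mat2) : mform :=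
  MForm (fun z => mscal (cx w z) T) (fun z => mscal (cy w z) T).
Definition mf_add (w1 w2 : mform) : mform :=
  MForm (fun z => madd (fx w1 z) (fx w2 z)) (fun z => madd (fy w1 z) (fy w2 z)).
Definition mf_scal (c : C) (w : mform) : mform :=
  MForm (fun z => mscal c (fx w z)) (fun z => mscal c (fy w z)).

Definition e_form (lam : R) : cform :=
  cf_scal (fun z => RtoC (2 / (1 - lam * (Cmod z)^2))) dz.
Definition Gamma_form (lam : R) : cform :=
  cf_scal (fun z => - Ci * RtoC lam / RtoC (1 - lam * (Cmod z)^2))
    (cf_add (cf_scal (fun z => z) dzbar) (cf_scal (fun z => - Cconj z) dz)).
Definition Ahat (lam : R) : mform :=
  mf_add (mf_scal (-1) (cf_tens (Gamma_form lam) t0))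
         (mf_scal (Ci / 2)
            (mf_add (cf_tens (e_form lam) (tm lam))
                    (mf_scal (-1) (cf_tens (cf_conj (e_form lam)) (tp lam))))).

Definition pullback (f : C -> C) (w : mform) : mform :=
  MForm (fun z => madd (mscal (RtoC (fst (pdx f z))) (fx w (f z)))
                       (mscal (RtoC (snd (pdx f z))) (fy w (f z))))
        (fun z => madd (mscal (RtoC (fst (pdy f z))) (fx w (f z)))
                       (mscal (RtoC (snd (pdy f z))) (fy w (f z)))).

Definition MC (g : C -> mat2) : mform :=
  MForm (fun z => mmul (minv (g z)) (mpdx g z))
        (fun z => mmul (minv (g z)) (mpdy g z)).

(** s^* A where A = U^{-1} dU, i.e. (U o s)^{-1} d(U o s) *)
Definition sA (lam0 lam : R) (F1 F2 : mat2 -> C) : mform :=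
  MC (fun z => Umap lam F1 F2 (sec lam0 z)).

Definition rmat (f1 : C -> C) (z : C) : mat2 :=
  Mat2 (Cconj (f1 z) / RtoC (Cmod (f1 z))) 0 0 (f1 z / RtoC (Cmod (f1 z))).

Definition gauge (r : C -> mat2) (w : mform) : mform :=
  MForm (fun z => madd (mmul (mmul (minv (r z)) (fx w z)) (r z))
                       (mmul (minv (r z)) (mpdx r z)))
        (fun z => madd (mmul (mmul (minv (r z)) (fy w z)) (r z))
                       (mmul (minv (r z)) (mpdy r z))).

(* Main.v *)
Require Import Defs.
From Stdlib Require Import Reals Lra.
From Coquelicot Require Import Coquelicot.
Open Scope R_scope.


Definition CD (h : R -> C) : C :=
  (Derive (fun t => fst (h t)) 0, Derive (fun t => snd (h t)) 0).
Definition Cex (h : R -> C) : Prop :=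
  ex_derive (fun t => fst (h t)) 0 /\ ex_derive (fun t => snd (h t)) 0.

Lemma Cex_mult h k : Cex h -> Cex k -> Cex (fun t => (h t * k t)%C).
Proof.
  intros [H1 H2] [K1 K2].
  set (h1 := fun t => fst (h t)) in *. set (h2 := fun t => snd (h t)) in *.
  set (k1 := fun t => fst (k t)) in *. set (k2 := fun t => snd (k t)) in *.
  split; simpl.
  - change (ex_derive (fun t => h1 t * k1 t - h2 t * k2 t) 0). auto_derive; auto.
  - change (ex_derive (fun t => h1 t * k2 t + h2 t * k1 t) 0). auto_derive; auto.
Qed.

Lemma CD_mult h k : Cex h -> Cex k ->
  CD (fun t => (h t * k t)%C) = (CD h * k 0 + h 0 * CD k)%C.
Proof.
  intros [H1 H2] [K1 K2].
  set (h1 := fun t => fst (h t)) in *. set (h2 := fun t => snd (h t)) in *.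
  set (k1 := fun t => fst (k t)) in *. set (k2 := fun t => snd (k t)) in *.
  unfold CD; apply injective_projections; simpl.
  - change (Derive (fun t => h1 t * k1 t - h2 t * k2 t) 0 =
     Derive h1 0 * k1 0 - Derive h2 0 * k2 0 + (h1 0 * Derive k1 0 - h2 0 * Derive k2 0)).
    apply is_derive_unique. auto_derive; auto. unfold h1,h2,k1,k2; cbv beta; ring.
  - change (Derive (fun t => h1 t * k2 t + h2 t * k1 t) 0 =
     Derive h1 0 * k2 0 + Derive h2 0 * k1 0 + (h1 0 * Derive k2 0 + h2 0 * Derive k1 0)).
    apply is_derive_unique. auto_derive; auto; unfold h1,h2,k1,k2; cbv beta; ring.
Qed.

Ltac compsets h :=
  let h1 := fresh "h1" in let h2 := fresh "h2" in
  set (h1 := fun t => fst (h t)) in *; set (h2 := fun t => snd (h t)) in *.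

Lemma Cex_conj h : Cex h -> Cex (fun t => Cconj (h t)).
Proof.
  intros [H1 H2]; split; simpl; auto.
  apply (ex_derive_opp (fun t => snd (h t))); auto.
Qed.

Lemma CD_conj h : Cex h -> CD (fun t => Cconj (h t)) = Cconj (CD h).
Proof.
  intros [H1 H2]; unfold CD, Cconj; simpl. f_equal.
  apply (Derive_opp (fun t => snd (h t))).
Qed.

Lemma Cex_RtoC u : ex_derive u 0 -> Cex (fun t => RtoC (u t)).
Proof. intros H; split; simpl; auto. apply ex_derive_const. Qed.

Lemma CD_RtoC u : CD (fun t => RtoC (u t)) = RtoC (Derive u 0).
Proof. unfold CD; simpl. rewrite Derive_const. reflexivity. Qed.

Lemma CD_ext_loc h k : locally 0 (fun t => h t = k t) -> CD h = CD k.
Proof.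
  intros H; unfold CD; f_equal; apply Derive_ext_loc;
  eapply filter_imp; try apply H; intros t Ht; simpl; rewrite Ht; auto.
Qed.

Lemma Cex_ext_loc h k : locally 0 (fun t => h t = k t) -> Cex h -> Cex k.
Proof.
  intros H [H1 H2]; split.
  - apply (ex_derive_ext_loc (fun t => fst (h t))); auto.
    eapply filter_imp; try apply H; intros t Ht; simpl; rewrite Ht; auto.
  - apply (ex_derive_ext_loc (fun t => snd (h t))); auto.
    eapply filter_imp; try apply H; intros t Ht; simpl; rewrite Ht; auto.
Qed.

Lemma Cex_inv h : Cex h -> h 0 <> 0%C -> Cex (fun t => / h t)%C.
Proof.
  intros [H1 H2] Hn.
  assert (Hq : fst (h 0) ^ 2 + snd (h 0) ^ 2 <> 0).
  { intro E. apply Hn. destruct (h 0) as [a b]; simpl in *.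
    assert (a = 0) by nra. assert (b = 0) by nra. subst; reflexivity. }
  compsets h.
  split; unfold Cinv; simpl.
  - change (ex_derive (fun t => h1 t / (h1 t ^ 2 + h2 t ^ 2)) 0). auto_derive; repeat split; auto.
  - change (ex_derive (fun t => - h2 t / (h1 t ^ 2 + h2 t ^ 2)) 0). auto_derive; repeat split; auto.
Qed.

Lemma CD_inv h : Cex h -> h 0 <> 0%C ->
  CD (fun t => / h t)%C = (- CD h / (h 0 * h 0))%C.
Proof.
  intros [H1 H2] Hn.
  assert (Hq : fst (h 0) ^ 2 + snd (h 0) ^ 2 <> 0).
  { intro E. apply Hn. destruct (h 0) as [a b]; simpl in *.
    assert (a = 0) by nra. assert (b = 0) by nra. subst; reflexivity. }
  compsets h.
  assert (E : (- CD h / (h 0 * h 0))%C =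
   ((- (Derive h1 0) * (h1 0 ^ 2 - h2 0 ^ 2) - Derive h2 0 * 2 * h1 0 * h2 0) / (h1 0 ^ 2 + h2 0 ^ 2) ^ 2,
    (Derive h1 0 * 2 * h1 0 * h2 0 - Derive h2 0 * (h1 0 ^ 2 - h2 0 ^ 2)) / (h1 0 ^ 2 + h2 0 ^ 2) ^ 2)).
  { unfold CD. fold h1 h2. unfold h1, h2 in *. destruct (h 0) as [a b]. simpl in *.
    assert (Dd : (a*a-b*b)*((a*a-b*b)*1) + (a*b+b*a)*((a*b+b*a)*1) = (a*(a*1)+b*(b*1))^2) by ring.
    apply injective_projections; simpl; rewrite Dd; field; intro; apply Hq; lra. }
  rewrite E. clear E.
  unfold CD; apply injective_projections; unfold Cinv; simpl.
  - change (Derive (fun t => h1 t / (h1 t ^ 2 + h2 t ^ 2)) 0 = 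
      (- (Derive h1 0) * (h1 0 ^ 2 - h2 0 ^ 2) - Derive h2 0 * 2 * h1 0 * h2 0) / (h1 0 ^ 2 + h2 0 ^ 2) ^ 2).
    apply is_derive_unique. auto_derive; [repeat split; auto|].
    unfold h1,h2 in *; cbv beta in *. field. auto.
  - change (Derive (fun t => - h2 t / (h1 t ^ 2 + h2 t ^ 2)) 0 = 
      (Derive h1 0 * 2 * h1 0 * h2 0 - Derive h2 0 * (h1 0 ^ 2 - h2 0 ^ 2)) / (h1 0 ^ 2 + h2 0 ^ 2) ^ 2).
    apply is_derive_unique. auto_derive; [repeat split; auto|].
    unfold h1,h2 in *; cbv beta in *. field. auto.
Qed.

Lemma Derive_sqrt_fun Q : ex_derive Q 0 -> 0 < Q 0 ->
  ex_derive (fun t => sqrt (Q t)) 0 /\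
  Derive (fun t => sqrt (Q t)) 0 = sqrt (Q 0) * (Derive Q 0 / (2 * Q 0)).
Proof.
  intros [d Hd] Hp.
  pose proof (is_derive_sqrt Q 0 d Hd Hp) as Hs.
  split. eexists; eauto.
  replace (Derive (fun t => sqrt (Q t)) 0) with (d / (2 * sqrt (Q 0)))
    by (symmetry; apply is_derive_unique; exact Hs).
  replace (Derive Q 0) with d by (symmetry; apply is_derive_unique; exact Hd).
  assert (sqrt (Q 0) * sqrt (Q 0) = Q 0) by (apply sqrt_sqrt; lra).
  assert (0 < sqrt (Q 0)) by (apply sqrt_lt_R0; auto).
  set (s := sqrt (Q 0)) in *. rewrite <- H. field. lra.
Qed.

Lemma Derive_invsqrt_fun Q : ex_derive Q 0 -> 0 < Q 0 ->
  ex_derive (fun t => / sqrt (Q t)) 0 /\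
  Derive (fun t => / sqrt (Q t)) 0 = / sqrt (Q 0) * (- Derive Q 0 / (2 * Q 0)).
Proof.
  intros Hd Hp. destruct (Derive_sqrt_fun Q Hd Hp) as [He E].
  assert (0 < sqrt (Q 0)) by (apply sqrt_lt_R0; auto).
  assert (Hi : is_derive (fun t => / sqrt (Q t)) 0 (- Derive (fun t => sqrt (Q t)) 0 / (sqrt (Q 0))^2)).
  { apply (is_derive_inv (fun t => sqrt (Q t))). apply Derive_correct; auto. lra. }
  split. eexists; eauto.
  replace (Derive (fun t => / sqrt (Q t)) 0) with (- Derive (fun t => sqrt (Q t)) 0 / (sqrt (Q 0))^2)
    by (symmetry; apply is_derive_unique; exact Hi).
  rewrite E. field. lra.
Qed.

Definition MD (G : R -> mat2) : mat2 :=
  Mat2 (CD (fun t => a11 (G t))) (CD (fun t => a12 (G t)))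
       (CD (fun t => a21 (G t))) (CD (fun t => a22 (G t))).

Definition Vm (lam : R) (h k : R -> C) (t : R) : mat2 :=
  mscal (RtoC (/ sqrt ((Cmod (h t))^2 - lam * (Cmod (k t))^2)))
        (Mat2 (h t) (RtoC lam * Cconj (k t)) (k t) (Cconj (h t))).
Definition Rm (h : R -> C) (t : R) : mat2 :=
  Mat2 (Cconj (h t) / RtoC (Cmod (h t))) 0 0 (h t / RtoC (Cmod (h t))).

Lemma Cex_const (c : C) : Cex (fun _ => c).
Proof. split; apply ex_derive_const. Qed.
Lemma CD_const (c : C) : CD (fun _ => c) = 0%C.
Proof. unfold CD; rewrite !Derive_const; reflexivity. Qed.

Lemma Cmod_sq (c : C) : Cmod c ^ 2 = fst c ^ 2 + snd c ^ 2.
Proof. unfold Cmod. rewrite pow2_sqrt; auto. nra. Qed.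

Lemma RtoC_fst (c : C) : RtoC (fst c) = ((c + Cconj c) / 2)%C.
Proof. destruct c as [a b]; unfold Cconj, RtoC; apply injective_projections; simpl; field. Qed.
Lemma RtoC_snd (c : C) : RtoC (snd c) = ((c - Cconj c) / (2 * Ci))%C.
Proof. destruct c as [a b]; unfold Cconj, RtoC, Ci; apply injective_projections; simpl; field. Qed.
Lemma Cconj_RtoC x : Cconj (RtoC x) = RtoC x.
Proof. unfold Cconj, RtoC; simpl; f_equal; ring. Qed.
Lemma RtoC_Cmod2 c : RtoC (Cmod c ^ 2) = (c * Cconj c)%C.
Proof. rewrite Cmod_sq. destruct c as [a b]; unfold Cconj, RtoC; apply injective_projections; simpl; ring. Qed.

Lemma Cn_lemma (lam : R) (h k : R -> C) : Cex h -> Cex k ->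
  Cmod (h 0) ^ 2 - lam * Cmod (k 0) ^ 2 > 0 ->
  let n := fun t => RtoC (/ sqrt ((Cmod (h t))^2 - lam * (Cmod (k t))^2)) in
  Cex n /\
  CD n = (n 0 * (- ((Cconj (h 0) * CD h + h 0 * Cconj (CD h))
                      - RtoC lam * (Cconj (k 0) * CD k + k 0 * Cconj (CD k)))
                 / (2 * (h 0 * Cconj (h 0) - RtoC lam * (k 0 * Cconj (k 0))))))%C.
Proof.
  intros [H1 H2] [K1 K2] Hp n.
  set (Pr := fun t => (fst (h t)^2 + snd (h t)^2) - lam * (fst (k t)^2 + snd (k t)^2)).
  assert (En : forall t, n t = RtoC (/ sqrt (Pr t))).
  { intro t. unfold n, Pr. rewrite !Cmod_sq. reflexivity. }
  assert (HP0 : 0 < Pr 0). { unfold Pr; rewrite <- !Cmod_sq; lra. }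
  assert (HPd : ex_derive Pr 0).
  { compsets h. compsets k. unfold Pr. change (ex_derive (fun t => (h1 t ^ 2 + h2 t ^ 2) - lam * (h0 t ^ 2 + h3 t ^ 2)) 0). auto_derive; repeat split; auto. }
  assert (EPd : Derive Pr 0 = 2 * (fst (h 0) * Derive (fun t => fst (h t)) 0 + snd (h 0) * Derive (fun t => snd (h t)) 0)
     - lam * (2 * (fst (k 0) * Derive (fun t => fst (k t)) 0 + snd (k 0) * Derive (fun t => snd (k t)) 0))).
  { compsets h. compsets k. unfold Pr. change (Derive (fun t => (h1 t ^ 2 + h2 t ^ 2) - lam * (h0 t ^ 2 + h3 t ^ 2)) 0 =
      2 * (h1 0 * Derive h1 0 + h2 0 * Derive h2 0) - lam * (2 * (h0 0 * Derive h0 0 + h3 0 * Derive h3 0))).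
    apply is_derive_unique. auto_derive; [repeat split; auto|]. unfold h0,h1,h2,h3; cbv beta; ring. }
  destruct (Derive_invsqrt_fun Pr HPd HP0) as [Ex ED].
  split.
  - apply (Cex_ext_loc (fun t => RtoC (/ sqrt (Pr t)))).
    + apply filter_forall. intro t; rewrite En; auto.
    + apply Cex_RtoC; auto.
  - rewrite (CD_ext_loc n (fun t => RtoC (/ sqrt (Pr t)))).
    2: { apply filter_forall. intro t; rewrite En; auto. }
    rewrite CD_RtoC, ED, En. unfold CD. rewrite EPd.
    unfold Pr in *. destruct (h 0) as [a b]; destruct (k 0) as [c d]. simpl in *.
    set (a' := Derive (fun t => fst (h t)) 0). set (b' := Derive (fun t => snd (h t)) 0).
    set (c' := Derive (fun t => fst (k t)) 0). set (d' := Derive (fun t => snd (k t)) 0).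
    set (s := / sqrt _).
    assert (a * a + b * b - lam * (c * c + d * d) <> 0) by (simpl in HP0; nra).
    unfold RtoC, Cconj. apply injective_projections; simpl; field; repeat split; intro; nra.
Qed.

Lemma Cm_lemma (h : R -> C) : Cex h -> h 0 <> 0%C ->
  let m := fun t => RtoC (Cmod (h t)) in
  Cex m /\
  CD m = (m 0 * ((Cconj (h 0) * CD h + h 0 * Cconj (CD h)) / (2 * (h 0 * Cconj (h 0)))))%C.
Proof.
  intros [H1 H2] Hn m.
  set (Q := fun t => fst (h t)^2 + snd (h t)^2).
  assert (HP0 : 0 < Q 0).
  { unfold Q. destruct (h 0) as [a b]; simpl.
    destruct (Req_dec a 0); destruct (Req_dec b 0); subst; try nra.
    exfalso; apply Hn; reflexivity. }
  assert (HPd : ex_derive Q 0).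
  { compsets h. unfold Q. change (ex_derive (fun t => (h1 t ^ 2 + h2 t ^ 2)) 0). auto_derive; repeat split; auto. }
  assert (EPd : Derive Q 0 = 2 * (fst (h 0) * Derive (fun t => fst (h t)) 0 + snd (h 0) * Derive (fun t => snd (h t)) 0)).
  { compsets h. unfold Q. change (Derive (fun t => (h1 t ^ 2 + h2 t ^ 2)) 0 =
      2 * (h1 0 * Derive h1 0 + h2 0 * Derive h2 0)).
    apply is_derive_unique. auto_derive; [repeat split; auto|]. unfold h1,h2; cbv beta; ring. }
  destruct (Derive_sqrt_fun Q HPd HP0) as [Ex ED].
  split.
  - apply Cex_RtoC; auto.
  - unfold m. rewrite CD_RtoC. change (fun t => Cmod (h t)) with (fun t => sqrt (Q t)).
    rewrite ED. unfold CD. rewrite EPd.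
    unfold Q in *. change (Cmod (h 0)) with (sqrt (fst (h 0) ^ 2 + snd (h 0) ^ 2)).
    destruct (h 0) as [a b]. simpl in *.
    set (a' := Derive (fun t => fst (h t)) 0). set (b' := Derive (fun t => snd (h t)) 0).
    set (s := sqrt _).
    unfold RtoC, Cconj. apply injective_projections; simpl; field; repeat split; intro; nra.
Qed.

Ltac crw H := let E := fresh "E" in pose proof H as E; cbv beta in E; rewrite E; clear E.
Ltac cexpand := cbv beta iota delta [Cconj Ci RtoC Cdiv Cminus Cinv Cmult Cplus Copp fst snd].

Lemma mat2_eq a b c d a' b' c' d' : a = a' -> b = b' -> c = c' -> d = d' -> Mat2 a b c d = Mat2 a' b' c' d'.
Proof. intros; subst; reflexivity. Qed.

Lemma Ahat_fx (lam:R) (w:C) : 1 - lam * Cmod w ^ 2 <> 0 ->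
  fx (Ahat lam) w = Mat2 (RtoC lam * (w - Cconj w) / (2 * (1 - RtoC lam * (w * Cconj w))))%C
                         (RtoC lam / (1 - RtoC lam * (w * Cconj w)))%C
                         (1 / (1 - RtoC lam * (w * Cconj w)))%C
                         (- RtoC lam * (w - Cconj w) / (2 * (1 - RtoC lam * (w * Cconj w))))%C.
Proof.
intros Hq. cbv beta iota delta [Ahat mf_add mf_scal cf_tens Gamma_form e_form cf_scal cf_add cf_conj dz dzbar t0 tp tm t1 t2 madd mscal a11 a12 a21 a22 fx fy cx cy].
rewrite Cmod_sq in *. destruct w as [x y]. cbv beta iota delta [fst snd] in Hq.
apply mat2_eq; cexpand; apply injective_projections; cexpand; field; repeat split; intro; nra.
Qed.

Lemma Ahat_fy (lam:R) (w:C) : 1 - lam * Cmod w ^ 2 <> 0 ->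
  fy (Ahat lam) w = Mat2 (Ci * (- RtoC lam * (w + Cconj w) / (2 * (1 - RtoC lam * (w * Cconj w)))))%C
                         (Ci * (- RtoC lam / (1 - RtoC lam * (w * Cconj w))))%C
                         (Ci * (1 / (1 - RtoC lam * (w * Cconj w))))%C
                         (Ci * (RtoC lam * (w + Cconj w) / (2 * (1 - RtoC lam * (w * Cconj w)))))%C.
Proof.
intros Hq. cbv beta iota delta [Ahat mf_add mf_scal cf_tens Gamma_form e_form cf_scal cf_add cf_conj dz dzbar t0 tp tm t1 t2 madd mscal a11 a12 a21 a22 fx fy cx cy].
rewrite Cmod_sq in *. destruct w as [x y]. cbv beta iota delta [fst snd] in Hq.
apply mat2_eq; cexpand; apply injective_projections; cexpand; field; repeat split; intro; nra.
Qed.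

Lemma key (lam : R) (h k g : R -> C) :
  Cex h -> Cex k -> h 0 <> 0%C ->
  Cmod (h 0) ^ 2 - lam * Cmod (k 0) ^ 2 > 0 ->
  locally 0 (fun t => g t = (k t / h t)%C) ->
  madd (mscal (RtoC (fst (CD g))) (fx (Ahat lam) (g 0)))
       (mscal (RtoC (snd (CD g))) (fy (Ahat lam) (g 0)))
  = madd (mmul (mmul (minv (Rm h 0)) (mmul (minv (Vm lam h k 0)) (MD (Vm lam h k)))) (Rm h 0))
         (mmul (minv (Rm h 0)) (MD (Rm h))).
Proof.
  intros Hh Hk Hn Hp Hloc.
  assert (Eg0 : g 0 = (k 0 / h 0)%C) by (apply (locally_singleton _ _ Hloc)).
  assert (ECDg : CD g = (CD k * / h 0 + k 0 * (- CD h / (h 0 * h 0)))%C).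
  { assert (E1 : CD g = CD (fun t : R => k t * / h t)%C) by (apply CD_ext_loc; exact Hloc).
    rewrite E1. crw (CD_mult _ _ Hk (Cex_inv _ Hh Hn)). rewrite (CD_inv _ Hh Hn). reflexivity. }
  destruct (Cn_lemma lam h k Hh Hk Hp) as [Exn ECDn].
  destruct (Cm_lemma h Hh Hn) as [Exm ECDm].
  assert (Hm0 : RtoC (Cmod (h 0)) <> 0%C).
  { intro E. apply Hn. apply Cmod_eq_0. injection E; auto. }
  pose proof (Cex_inv _ Exm Hm0) as Exmu.
  pose proof (CD_inv _ Exm Hm0) as ECDmu. cbv beta in ECDmu.
  cbv beta iota delta [MD Vm Rm mscal a11 a12 a21 a22].
  unfold Cdiv. cbv beta in Exmu.
  crw (CD_mult _ _ Exn Hh).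
  crw (CD_mult _ _ Exn (Cex_mult _ _ (Cex_const (RtoC lam)) (Cex_conj _ Hk))).
  crw (CD_mult _ _ (Cex_const (RtoC lam)) (Cex_conj _ Hk)).
  crw (CD_mult _ _ Exn Hk).
  crw (CD_mult _ _ Exn (Cex_conj _ Hh)).
  crw (CD_mult _ _ (Cex_conj _ Hh) Exmu).
  crw (CD_mult _ _ Hh Exmu).
  rewrite !CD_const. crw (CD_conj _ Hk). crw (CD_conj _ Hh).
  rewrite ECDmu, ECDm, ECDn. clear ECDmu ECDm ECDn.
  assert (Hhpos : 0 < Cmod (h 0)) by (apply Cmod_gt_0; auto).
  assert (Hq : 1 - lam * Cmod (g 0) ^ 2 <> 0).
  { rewrite Eg0, Cmod_div by auto.
    assert (X : 1 - lam * (Cmod (k 0) / Cmod (h 0)) ^ 2 = (Cmod (h 0) ^ 2 - lam * Cmod (k 0) ^ 2) / Cmod (h 0) ^ 2)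
      by (field; lra).
    rewrite X. assert (0 < (Cmod (h 0) ^ 2 - lam * Cmod (k 0) ^ 2) / Cmod (h 0) ^ 2)
      by (apply Rdiv_lt_0_compat; nra). lra. }
  rewrite (Ahat_fx _ _ Hq), (Ahat_fy _ _ Hq).
  rewrite Eg0, RtoC_fst, RtoC_snd, ECDg.
  assert (Hhb : Cconj (h 0) <> 0%C).
  { intro E. apply Hn. rewrite <- (Cconj_conj (h 0)), E. cexpand. apply injective_projections; cexpand; ring. }
  rewrite !Cplus_conj, !Cmult_conj, !Cinv_conj, !Cdiv_conj, !Copp_conj, !Cmult_conj; auto.
  all: try (apply Cmult_neq_0; auto).
  assert (HP : (h 0 * Cconj (h 0) - RtoC lam * (k 0 * Cconj (k 0)))%C <> 0%C).
  { rewrite <- !RtoC_Cmod2, <- RtoC_mult, <- RtoC_minus. intro E. apply RtoC_inj in E. lra. }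
  assert (HQ : (1 - RtoC lam * (k 0 / h 0 * (Cconj (k 0) / Cconj (h 0))))%C <> 0%C).
  { intro E. apply HP.
    replace (h 0 * Cconj (h 0) - RtoC lam * (k 0 * Cconj (k 0)))%C
      with (h 0 * Cconj (h 0) * (1 - RtoC lam * (k 0 / h 0 * (Cconj (k 0) / Cconj (h 0)))))%C
      by (field; split; auto).
    rewrite E; ring. }
  assert (Hnn : RtoC (/ sqrt (Cmod (h 0) ^ 2 - lam * Cmod (k 0) ^ 2)) <> 0%C).
  { intro E. apply RtoC_inj in E. apply (Rinv_neq_0_compat (sqrt (Cmod (h 0) ^ 2 - lam * Cmod (k 0) ^ 2))).
    apply Rgt_not_eq, sqrt_lt_R0; lra. exact E. }
  assert (HCi : Ci <> 0%C).
  { intro E. injection E. intros; lra. }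
  assert (E2 : RtoC 2 = (1 + 1)%C) by (cexpand; apply injective_projections; cexpand; ring).
  assert (H2 : (1 + 1)%C <> 0%C) by (rewrite <- E2; intro E; apply RtoC_inj in E; lra).
  set (n := RtoC (/ sqrt (Cmod (h 0) ^ 2 - lam * Cmod (k 0) ^ 2))) in *.
  set (m := RtoC (Cmod (h 0))) in *.
  set (L := RtoC lam) in *.
  set (A := h 0) in *. set (B := k 0) in *. set (A' := CD h) in *. set (B' := CD k) in *.
  set (Ab := Cconj A) in *. set (Bb := Cconj B) in *. set (Ab' := Cconj A') in *. set (Bb' := Cconj B') in *.
  clearbody n m L A B A' B' Ab Bb Ab' Bb'.
  cbv beta iota delta [madd mmul minv mdet mscal a11 a12 a21 a22].
  rewrite !E2.
  apply mat2_eq.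
  all: field; repeat split; auto.
  all: replace (n * A * (n * Ab) - n * (L * Bb) * (n * B))%C with (n * n * (A * Ab - L * (B * Bb)))%C by ring;
    repeat apply Cmult_neq_0; auto.
Qed.

Lemma loc_ne u : ex_derive u 0 -> u 0 <> 0 -> locally 0 (fun t => u t <> 0).
Proof.
  intros Hd Hn.
  assert (Hc : continuity_pt u 0).
  { destruct Hd as [l Hl]. apply is_derive_Reals in Hl. apply derivable_continuous_pt. exists l; exact Hl. }
  assert (Hpos : 0 < Rabs (u 0)) by (apply Rabs_pos_lt; auto).
  apply continuity_pt_locally with (eps := mkposreal _ Hpos) in Hc.
  eapply filter_imp; [|exact Hc]. simpl. intros t Ht E. rewrite E in Ht.
  rewrite Rminus_0_l, Rabs_Ropp in Ht. lra.
Qed.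
Lemma loc_pos u : ex_derive u 0 -> 0 < u 0 -> locally 0 (fun t => 0 < u t).
Proof.
  intros Hd Hn.
  assert (Hc : continuity_pt u 0).
  { destruct Hd as [l Hl]. apply is_derive_Reals in Hl. apply derivable_continuous_pt. exists l; exact Hl. }
  apply continuity_pt_locally with (eps := mkposreal _ Hn) in Hc.
  eapply filter_imp; [|exact Hc]. simpl. intros t Ht.
  apply Rabs_def2 in Ht. lra.
Qed.

Lemma partial_x (G : R -> R -> R) x y : differentiable_pt G x y -> ex_derive (fun t => G (x + t) y) 0.
Proof.
  intros [lx [ly Hd]].
  assert (H1 : derivable_pt_lim (fun t => x + t) 0 1).
  { apply is_derive_Reals. auto_derive; auto. }
  assert (H2 : derivable_pt_lim (fun _ => y) 0 0).
  { apply is_derive_Reals. auto_derive; auto. }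
  assert (Hd' : differentiable_pt_lim G ((fun t => x + t) 0) ((fun _ => y) 0) lx ly).
  { cbv beta. rewrite Rplus_0_r. exact Hd. }
  pose proof (derivable_pt_lim_comp_2d G _ _ 0 lx ly 1 0 Hd' H1 H2) as Hc.
  exists (lx * 1 + ly * 0). apply is_derive_Reals. exact Hc.
Qed.

Lemma partial_y (G : R -> R -> R) x y : differentiable_pt G x y -> ex_derive (fun t => G x (y + t)) 0.
Proof.
  intros [lx [ly Hd]].
  assert (H1 : derivable_pt_lim (fun t => y + t) 0 1).
  { apply is_derive_Reals. auto_derive; auto. }
  assert (H2 : derivable_pt_lim (fun _ => x) 0 0).
  { apply is_derive_Reals. auto_derive; auto. }
  assert (Hd' : differentiable_pt_lim G ((fun _ => x) 0) ((fun t => y + t) 0) lx ly).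
  { cbv beta. rewrite Rplus_0_r. exact Hd. }
  pose proof (derivable_pt_lim_comp_2d G _ _ 0 lx ly 0 1 Hd' H2 H1) as Hc.
  exists (lx * 0 + ly * 1). apply is_derive_Reals. exact Hc.
Qed.

Lemma sec_s_pos lam0 w : inD lam0 w -> 0 < / sqrt (1 - lam0 * Cmod w ^ 2).
Proof. unfold inD; intro H. apply Rinv_0_lt_compat, sqrt_lt_R0. lra. Qed.

Lemma inH_sec lam0 w : inD lam0 w -> inH lam0 (sec lam0 w).
Proof.
  intros H. pose proof (sec_s_pos _ _ H) as Hs. unfold inD in H.
  unfold inH, sec, mscal; cbv beta iota delta [a11 a12 a21 a22].
  split; [|split].
  - rewrite Cmult_conj, Cconj_RtoC. cexpand. apply injective_projections; cexpand; ring.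
  - rewrite Cmult_conj, Cconj_RtoC. cexpand. apply injective_projections; cexpand; ring.
  - rewrite !Cmod_mult, Cmod_R, Rabs_pos_eq by lra.
    assert (E1 : Cmod 1 = 1) by (apply Cmod_1).
    rewrite E1. rewrite <- !RtoC_pow, <- RtoC_mult, <- RtoC_minus. f_equal.
    set (s := / sqrt (1 - lam0 * Cmod w ^ 2)).
    assert (Es : s ^ 2 = / (1 - lam0 * Cmod w ^ 2)).
    { unfold s. rewrite <- Rinv_pow. rewrite pow2_sqrt by lra. reflexivity.
      apply Rgt_not_eq, sqrt_lt_R0; lra. }
    replace ((s * 1) ^ 2 - lam0 * (s * Cmod w) ^ 2) with (s ^ 2 * (1 - lam0 * Cmod w ^ 2)) by ring.
    rewrite Es. field. lra.
Qed.

Lemma RtoC_neq0 x : x <> 0 -> RtoC x <> 0%C.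
Proof. intros H E. apply H. apply RtoC_inj in E. exact E. Qed.

Lemma f_eq (lam0 lam : R) (F1 F2 : mat2 -> C) (f : C -> C)
  (Hpos : forall h, inH lam0 h -> (Cmod (F1 h))^2 > lam * (Cmod (F2 h))^2)
  (Hbundle : forall h, inH lam0 h -> a11 h <> 0%C ->
     a11 (Umap lam F1 F2 h) <> 0%C ->
     proj (Umap lam F1 F2 h) = f (proj h)) :
  forall w, inD lam0 w -> F1 (sec lam0 w) <> 0%C ->
  f w = (F2 (sec lam0 w) / F1 (sec lam0 w))%C.
Proof.
  intros w Hw Hf.
  pose proof (sec_s_pos _ _ Hw) as Hs.
  pose proof (inH_sec _ _ Hw) as HH.
  pose proof (Hpos _ HH) as Hp.
  assert (HN : 0 < / sqrt (Cmod (F1 (sec lam0 w)) ^ 2 - lam * Cmod (F2 (sec lam0 w)) ^ 2)).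
  { apply Rinv_0_lt_compat, sqrt_lt_R0. lra. }
  assert (H1 : a11 (sec lam0 w) <> 0%C).
  { unfold sec, mscal; cbv beta iota delta [a11]. apply Cmult_neq_0.
    apply RtoC_neq0; lra. apply RtoC_neq0; lra. }
  assert (H2 : a11 (Umap lam F1 F2 (sec lam0 w)) <> 0%C).
  { unfold Umap, mscal; cbv beta iota delta [a11]. apply Cmult_neq_0; auto.
    apply RtoC_neq0; lra. }
  pose proof (Hbundle _ HH H1 H2) as E.
  assert (Ep : proj (sec lam0 w) = w).
  { unfold proj, sec, mscal; cbv beta iota delta [a11 a21]. field. repeat split; apply RtoC_neq0; lra. }
  rewrite Ep in E. rewrite <- E.
  unfold proj, Umap, mscal; cbv beta iota delta [a11 a21]. field. repeat split; auto; apply RtoC_neq0; lra.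
Qed.

Lemma dir_lemma (lam0 lam : R)
  (F1 F2 : mat2 -> C) (f : C -> C)
  (Hpos : forall h, inH lam0 h -> (Cmod (F1 h))^2 > lam * (Cmod (F2 h))^2)
  (Hbundle : forall h, inH lam0 h -> a11 h <> 0%C ->
     a11 (Umap lam F1 F2 h) <> 0%C ->
     proj (Umap lam F1 F2 h) = f (proj h))
  (HF1 : forall z, inD lam0 z -> real_diff (fun w => F1 (sec lam0 w)) z)
  (HF2 : forall z, inD lam0 z -> real_diff (fun w => F2 (sec lam0 w)) z)
  (z : C) (p : R -> C)
  (Hp0 : p 0 = z)
  (HpD : forall F : C -> R, differentiable_pt (fun x y => F (x, y)) (fst z) (snd z) ->
         ex_derive (fun t => F (p t)) 0)
  (HpDom : locally 0 (fun t => inD lam0 (p t)))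
  (Hz : inD lam0 z) (Hf1 : F1 (sec lam0 z) <> 0%C) :
  madd (mscal (RtoC (fst (CD (fun t => f (p t))))) (fx (Ahat lam) (f z)))
       (mscal (RtoC (snd (CD (fun t => f (p t))))) (fy (Ahat lam) (f z)))
  = madd (mmul (mmul (minv (rmat (fun w => F1 (sec lam0 w)) z))
                     (mmul (minv (Umap lam F1 F2 (sec lam0 z)))
                           (MD (fun t => Umap lam F1 F2 (sec lam0 (p t))))))
               (rmat (fun w => F1 (sec lam0 w)) z))
         (mmul (minv (rmat (fun w => F1 (sec lam0 w)) z))
               (MD (fun t => rmat (fun w => F1 (sec lam0 w)) (p t)))).
Proof.
  set (h := fun t => F1 (sec lam0 (p t))).
  set (k := fun t => F2 (sec lam0 (p t))).
  set (g := fun t => f (p t)).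
  assert (Hh : Cex h).
  { destruct (HF1 z Hz) as [D1 D2]. split.
    - apply (HpD (fun w => fst (F1 (sec lam0 w)))). exact D1.
    - apply (HpD (fun w => snd (F1 (sec lam0 w)))). exact D2. }
  assert (Hk : Cex k).
  { destruct (HF2 z Hz) as [D1 D2]. split.
    - apply (HpD (fun w => fst (F2 (sec lam0 w)))). exact D1.
    - apply (HpD (fun w => snd (F2 (sec lam0 w)))). exact D2. }
  assert (Hn : h 0 <> 0%C) by (unfold h; rewrite Hp0; exact Hf1).
  assert (Hp : Cmod (h 0) ^ 2 - lam * Cmod (k 0) ^ 2 > 0).
  { unfold h, k; rewrite Hp0. pose proof (Hpos _ (inH_sec _ _ Hz)). lra. }
  assert (Hne : locally 0 (fun t => h t <> 0%C)).
  { destruct Hh as [Hh1 Hh2].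
    destruct (Req_dec (fst (h 0)) 0) as [E1|E1].
    - assert (E2 : snd (h 0) <> 0).
      { intro E2. apply Hn. destruct (h 0) as [a b]. simpl in *. subst. reflexivity. }
      eapply filter_imp; [|exact (loc_ne _ Hh2 E2)]. intros t Ht E. apply Ht. rewrite E. reflexivity.
    - eapply filter_imp; [|exact (loc_ne _ Hh1 E1)]. intros t Ht E. apply Ht. rewrite E. reflexivity. }
  assert (Hloc : locally 0 (fun t => g t = (k t / h t)%C)).
  { eapply filter_imp; [|exact (filter_and _ _ HpDom Hne)].
    intros t [Ht1 Ht2]. unfold g, h, k. apply (f_eq lam0 lam F1 F2 f Hpos Hbundle); auto. }
  pose proof (key lam h k g Hh Hk Hn Hp Hloc) as K.
  rewrite <- Hp0.
  exact K.
Qed.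

Theorem corollary4p5 (lam0 lam : R)
  (Hlam0 : lam0 = -1 \/ lam0 = 0 \/ lam0 = 1)
  (Hlam : lam = -1 \/ lam = 0 \/ lam = 1)
  (F1 F2 : mat2 -> C) (f : C -> C)
  (* |F1|^2 > lam |F2|^2 on H^1_{lam0} *)
  (Hpos : forall h, inH lam0 h -> (Cmod (F1 h))^2 > lam * (Cmod (F2 h))^2)
  (* U is a bundle map covering f : pi_lam o U = f o pi_lam0 (affine charts) *)
  (Hbundle : forall h, inH lam0 h -> a11 h <> 0%C ->
     a11 (Umap lam F1 F2 h) <> 0%C ->
     proj (Umap lam F1 F2 h) = f (proj h))
  (* regularity of U along the section s *)
  (HF1 : forall z, inD lam0 z -> real_diff (fun w => F1 (sec lam0 w)) z)
  (HF2 : forall z, inD lam0 z -> real_diff (fun w => F2 (sec lam0 w)) z)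
  (* f is holomorphic (where it takes finite values) *)
  (Hf : forall z, inD lam0 z -> F1 (sec lam0 z) <> 0%C -> holo_at f z) :
  let f1 := fun z => F1 (sec lam0 z) in
  forall z, inD lam0 z -> f1 z <> 0%C ->
    fx (pullback f (Ahat lam)) z = fx (gauge (rmat f1) (sA lam0 lam F1 F2)) z /\
    fy (pullback f (Ahat lam)) z = fy (gauge (rmat f1) (sA lam0 lam F1 F2)) z.
Proof.
  intros f1 z Hz Hf1z.
  assert (Hd0 : 0 < 1 - lam0 * (fst z ^ 2 + snd z ^ 2)).
  { unfold inD in Hz. rewrite Cmod_sq in Hz. lra. }
  split.
  - assert (Hp0 : (fst z + 0, snd z) = z).
    { rewrite Rplus_0_r. destruct z; reflexivity. }
    assert (HpDom : locally 0 (fun t => inD lam0 (fst z + t, snd z))).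
    { assert (Hu : ex_derive (fun t => 1 - lam0 * ((fst z + t) ^ 2 + snd z ^ 2)) 0) by (auto_derive; auto).
      assert (Hu0 : 0 < 1 - lam0 * ((fst z + 0) ^ 2 + snd z ^ 2)) by (rewrite Rplus_0_r; exact Hd0).
      eapply filter_imp; [|exact (loc_pos _ Hu Hu0)].
      intros t Ht. cbv beta in Ht. unfold inD. rewrite Cmod_sq. cbn [fst snd]. lra. }
    exact (dir_lemma lam0 lam F1 F2 f Hpos Hbundle HF1 HF2 z (fun t => (fst z + t, snd z)) Hp0
             (fun F Hd => partial_x (fun x y => F (x, y)) _ _ Hd) HpDom Hz Hf1z).
  - assert (Hp0 : (fst z, snd z + 0) = z).
    { rewrite Rplus_0_r. destruct z; reflexivity. }
    assert (HpDom : locally 0 (fun t => inD lam0 (fst z, snd z + t))).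
    { assert (Hu : ex_derive (fun t => 1 - lam0 * (fst z ^ 2 + (snd z + t) ^ 2)) 0) by (auto_derive; auto).
      assert (Hu0 : 0 < 1 - lam0 * (fst z ^ 2 + (snd z + 0) ^ 2)) by (rewrite Rplus_0_r; exact Hd0).
      eapply filter_imp; [|exact (loc_pos _ Hu Hu0)].
      intros t Ht. cbv beta in Ht. unfold inD. rewrite Cmod_sq. cbn [fst snd]. lra. }
    exact (dir_lemma lam0 lam F1 F2 f Hpos Hbundle HF1 HF2 z (fun t => (fst z, snd z + t)) Hp0
             (fun F Hd => partial_y (fun x y => F (x, y)) _ _ Hd) HpDom Hz Hf1z).
Qed.
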